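(* Let $P$ be a poset and let $\overline{down(P)}$ denote the topological closure of $down(P)=\{\downarrow x: x\in P\}$ in $\mathfrak{P}(P)$. Then $\emptyset\notin\overline{down(P)}$ if and only if $P$ is a finitely generated final segment of itself, i.e. $P=\uparrow F:=\{y\in P: f\leq y \text{ for some } f\in F\}$ for some finite $F\subseteq P$.
   Context: $\mathfrak{P}(P)$ is the power set of $P$ with the topology whose basic open sets are $O(F,G)=\{X\subseteq P: F\subseteq X,\ G\cap X=\emptyset\}$ for finite $F,G\subseteq P$. $\downarrow x=\{y\in P:y\leq x\}$. *)

(* Defs.v *)
From HB Require Import structures.
From mathcomp Require Import all_boot all_order.
From mathcomp Require Import boolp classical_sets cardinality.
Set Implicit Arguments. Unset Strict Implicit. Unset Printing Implicit Defensive.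
Import Order.Theory.
Local Open Scope classical_set_scope.
Local Open Scope order_scope.

(* The power set P(P) with the topology whose basic open sets are
   O(F,G) = {X | F ⊆ X, G ∩ X = ∅} for finite F, G ⊆ P. *)
Definition basic_open (T : Type) (F G : set T) : set (set T) :=
  [set X | F `<=` X /\ G `&` X = set0].

Definition pclosure (T : Type) (A : set (set T)) : set (set T) :=
  [set X | forall F G : set T, finite_set F -> finite_set G ->
     basic_open F G X -> exists2 Y, A Y & basic_open F G Y].

Definition downset d (P : porderType d) (x : P) : set P := [set y | y <= x].

Definition down_sets d (P : porderType d) : set (set P) := range (@downset d P).

Definition upset d (P : porderType d) (F : set P) : set P :=
  [set y | exists2 f, F f & f <= y].

(* Main.v *)
Require Import Defs.
From HB Require Import structures.
From mathcomp Require Import all_boot all_order.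
From mathcomp Require Import boolp classical_sets cardinality.
Local Open Scope classical_set_scope.

Theorem lemma3p1 (d : Order.disp_t) (P : porderType d) :
  ~ pclosure (@down_sets d P) set0 <->
  exists F : set P, finite_set F /\ [set: P] = upset F.
Proof.
split.
- move=> Hn; apply: contrapT => Hno; apply: Hn.
  move=> F G _ fG [HF _].
  have [x Hx] : exists x : P, ~ upset G x.
    apply: contrapT => H; apply: Hno; exists G; split => //.
    apply/seteqP; split => y _ //.
    by apply: contrapT => Hy; apply: H; exists y.
  exists (downset x); first by exists x.
  split; first by move=> y /HF.
  apply/seteqP; split => y // [Gy yx]; apply: Hx; by exists y.
- move=> [F [fF HF]] Hc.
  have [Y [x _ <-] [_ HY]] := Hc set0 F (@finite_set0 P) fF (conj (@sub0set _ _) (setI0 F)).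
  have : upset F x by rewrite -HF.
  move=> [f Ff fx].
  have : ((F `&` downset x)%O : set P) f by split.
  by rewrite HY.
Qed.
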